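(* Let $n=2^t m$ with $t\ge 0$ and $m$ odd, and let $D_n$ be the dihedral group of order $2n$. Then $\mathrm{mixlen}(D_n)\le t+m$.
   Context: For a finite group $G$, a random subproduct is a random element $g_1^{\epsilon_1}\cdots g_k^{\epsilon_k}$ with $g_1,\dots,g_k\in G$ fixed and $\epsilon_1,\dots,\epsilon_k$ independent Bernoulli random variables, $\epsilon_i\sim\mathrm{Ber}(p_i)$, $p_i\in[0,1]$. $\mathrm{mixlen}(G)$ is the minimal number $k$ of factors in a random subproduct that is distributed exactly uniformly on $G$. *)

(* Defs.v *)
From HB Require Import structures.
From mathcomp Require Import all_boot all_order all_algebra all_fingroup.
From mathcomp Require Import boolp reals.
Set Implicit Arguments. Unset Strict Implicit. Unset Printing Implicit Defensive.
Import Order.TTheory GRing.Theory Num.Theory.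

Definition subprod_prob (R : realType) (gT : finGroupType) (k : nat)
    (g : 'I_k -> gT) (p : 'I_k -> R) (x : gT) : R :=
  (\sum_(e : {ffun 'I_k -> bool}
          | (\prod_(i < k) (if e i then g i else 1))%g == x)
      \prod_(i < k) (if e i then p i else 1 - p i))%R.

Definition mixes_in (R : realType) (gT : finGroupType) (G : {group gT})
    (k : nat) : Prop :=
  exists (g : 'I_k -> gT) (p : 'I_k -> R),
    [/\ forall i, g i \in G,
        forall i, (0 <= p i <= 1)%R &
        forall x, x \in G -> subprod_prob g p x = (#|G|%:R)^-1%R].

Definition mixlen (R : realType) (gT : finGroupType) (G : {group gT}) : nat :=
  match pselect (exists k, `[< mixes_in R G k >]) with
  | left h => ex_minn h
  | right _ => 0%N
  end.

(* G is a dihedral group of order 2n (n >= 1): presentation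
   <x, y | x^n = y^2 = 1, x^y = x^-1>. This covers n = 1, 2 as well. *)
Definition is_dihedral (gT : finGroupType) (G : {group gT}) (n : nat) : Prop :=
  (G \isog Grp (x : y : x ^+ n, y ^+ 2, x ^ y = x^-1))%g.

(* Main.v *)
Require Import Defs.
From HB Require Import structures.
From mathcomp Require Import all_boot all_order all_algebra all_fingroup.
From mathcomp Require Import boolp reals.
From mathcomp Require Import all_solvable.
From mathcomp Require Import ring lra zify.
Set Implicit Arguments. Unset Strict Implicit. Unset Printing Implicit Defensive.
Import Order.TTheory GRing.Theory Num.Theory.
Definition consf {T : Type} {k : nat} (a : T) (f : 'I_k -> T) : 'I_k.+1 -> T :=
  fun i => if unlift ord0 i is Some j then f j else a.

Lemma consf0 T k (a : T) (f : 'I_k -> T) : consf a f ord0 = a.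
Proof. by rewrite /consf unlift_none. Qed.

Lemma consfS T k (a : T) (f : 'I_k -> T) j : consf a f (lift ord0 j) = f j.
Proof. by rewrite /consf liftK. Qed.

Lemma sum_pairE (R : realType) (I J : finType) (F : I * J -> R) :
  (\sum_p F p = \sum_i \sum_j F (i, j))%R.
Proof. by rewrite pair_bigA; apply: eq_bigr => -[]. Qed.

Lemma subprod_cons (R : realType) (gT : finGroupType) k (g0 : gT) (g : 'I_k -> gT)
   (p0 : R) p x :
 subprod_prob (consf g0 g) (consf p0 p) x =
   ((1 - p0) * subprod_prob g p x + p0 * subprod_prob g p (g0^-1 * x)%g)%R.
Proof.
rewrite /subprod_prob.
pose h := fun bp : bool * {ffun 'I_k -> bool} => ([ffun i => consf bp.1 bp.2 i] : {ffun 'I_k.+1 -> bool}).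
rewrite (reindex h); last first.
  exists (fun e : {ffun 'I_k.+1 -> bool} => (e ord0, [ffun j => e (lift ord0 j)])).
    by move=> [b e] _; rewrite /h /= ffunE consf0; congr pair; apply/ffunP=> j; rewrite !ffunE consfS.
  move=> e _; apply/ffunP=> i; rewrite /h ffunE /consf /=.
  by case: unliftP => [j ->|->]; rewrite ?ffunE.
rewrite big_mkcond /= sum_pairE big_bool /=.
rewrite !big_distrr /= addrC; congr (_ + _)%R; rewrite [RHS]big_mkcond; apply: eq_bigr => e _;
  rewrite big_ord_recl big_ord_recl /h /= !ffunE !consf0 ?mul1g;
  rewrite (eq_bigr (fun i => if e i then g i else 1)%g); try by move=> i _; rewrite ffunE !consfS.
- case: ifP => _ //; congr (_ * _)%R; apply: eq_bigr => i _; by rewrite ffunE !consfS.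
- rewrite -(inj_eq (mulgI (g0^-1)%g)) mulKg.
  case: ifP => _ //; congr (_ * _)%R; apply: eq_bigr => i _; by rewrite ffunE !consfS.
Qed.

Section G.
Variables (gT : finGroupType) (x y : gT) (n : nat).
Hypotheses (Hx : (x ^+ n = 1)%g) (Hy : (y ^+ 2 = 1)%g) (Hxy : (x ^ y = x^-1)%g).
Local Open Scope group_scope.

Lemma yV : y^-1 = y.
Proof. by apply/eqP; rewrite eq_invg_mul -(expgS y 1) Hy. Qed.

Lemma yyb (b : bool) : y * y ^+ b = y ^+ (~~ b).
Proof. by case: b; rewrite /= ?mulg1 // -(expgS y 1) Hy. Qed.

Lemma xpow_inv (c i : nat) : c < n -> i < n ->
  x ^+ ((c + n - i) %% n) = (x ^+ (n - c + i))^-1.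
Proof.
move=> hc hi; rewrite expg_mod //; apply/eqP; rewrite eq_sym eq_invg_mul -expgD.
have -> : (n - c + i + (c + n - i) = n * 2)%N by lia.
by rewrite expgM Hx expg1n.
Qed.

Lemma refl_step (c i : nat) (b : bool) : c < n -> i < n ->
  (x ^+ c * y)^-1 * (x ^+ i * y ^+ b) = x ^+ ((c + n - i) %% n) * y ^+ (~~ b).
Proof.
move=> hc hi; rewrite xpow_inv // invMg yV.
have xc : (x ^+ c)^-1 = x ^+ (n - c).
  by apply/eqP; rewrite eq_invg_mul -(expgD x) subnKC ?(ltnW hc) // Hx.
rewrite xc !mulgA -(mulgA y) -expgD -yyb mulgA; congr (_ * _).
have H : (x ^+ (n - c + i)) ^ y = (x ^+ (n - c + i))^-1 by rewrite conjXg Hxy expgVn.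
by rewrite -H /conjg yV -!mulgA -(expgS y 1) Hy mulg1.
Qed.

Variables (R : realType) (G : {group gT}).
Hypotheses (Gx : x \in G) (Gy : y \in G) (n_gt0 : 0 < n).
Hypothesis Hinj : forall i j (b c : bool), i < n -> j < n ->
  x ^+ i * y ^+ b = x ^+ j * y ^+ c -> i = j /\ b = c.

Definition Inv k (g : 'I_k -> gT) (p : 'I_k -> R) (w : nat -> R) :=
  [/\ forall i, g i \in G, forall i, (0 <= p i <= 1)%R &
      forall i (b : bool), i < n -> subprod_prob g p (x ^+ i * y ^+ b) = w i].

Lemma consfP T k (P : T -> Prop) a (f : 'I_k -> T) :
  P a -> (forall j, P (f j)) -> forall i, P (consf a f i).
Proof. by move=> Pa Pf i; rewrite /consf; case: unlift. Qed.

Lemma idx_mod c i : c < n -> i < n ->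
  (c + n - i) %% n = if i <= c then c - i else c + n - i.
Proof.
move=> hc hi; case: ifP => h.
  have -> : (c + n - i = (c - i) + n)%N by lia.
  by rewrite modnDr modn_small //; lia.
by rewrite modn_small //; lia.
Qed.

Lemma Inv_step k (g : 'I_k -> gT) p w c p0 : Inv g p w -> c < n -> (0 <= p0 <= 1)%R ->
  Inv (consf (x ^+ c * y) g) (consf p0 p)
    (fun i => (1 - p0) * w i + p0 * w (if (i <= c)%N then (c - i)%N else (c + n - i)%N))%R.
Proof.
case=> Hg Hp Hw hc hp0; split.
- by move=> i; rewrite /consf; case: unlift => [j|] //; rewrite groupM ?groupX.
- by move=> i; rewrite /consf; case: unlift.
- move=> i b hi; rewrite subprod_cons refl_step // !Hw ?ltn_pmod // idx_mod //.
Qed.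

Lemma Inv_weq k (g : 'I_k -> gT) p w w' : Inv g p w ->
  (forall i, i < n -> w i = w' i) -> Inv g p w'.
Proof. by case=> H1 H2 H3 E; split=> // i b hi; rewrite H3 // E. Qed.

Lemma subprod0 (g : 'I_0 -> gT) (p : 'I_0 -> R) z :
  subprod_prob g p z = ((z == 1%g)%:R)%R.
Proof.
rewrite /subprod_prob big_mkcond (big_pred1 [ffun i : 'I_0 => false]).
  by rewrite !big_ord0 eq_sym; case: eqP.
by move=> e /=; apply/esym/eqP/ffunP => -[].
Qed.

Lemma eqxy i j (b c : bool) : i < n -> j < n ->
  (x ^+ i * y ^+ b == x ^+ j * y ^+ c) = (i == j) && (b == c).
Proof.
move=> hi hj; apply/eqP/andP => [/Hinj [] // -> ->|[/eqP -> /eqP ->]] //.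
Qed.

Definition wA (N a L : nat) (i : nat) : R :=
  (if i == 0%N then a%:R / (2 * N%:R) else if (i < L)%N then 1 / (2 * N%:R) else 0)%R.

Definition wB (L : nat) (i : nat) : R := (if (i < L)%N then 1 / (2 * L%:R) else 0)%R.

Definition g1 : 'I_1 -> gT := consf y (fun _ : 'I_0 => y).
Definition p1 : 'I_1 -> R := consf (1 / 2)%R (fun _ : 'I_0 => 0%R).

Lemma Inv_base N : 0 < N -> Inv g1 p1 (wA N N 1).
Proof.
move=> N0; split.
- by move=> i; rewrite /g1 /consf; case: unlift.
- move=> i; rewrite /p1 /consf; case: unlift => [[] //|]; first by apply/andP; split; lra.
- move=> i b hi; rewrite subprod_cons !subprod0.
  have -> : (x ^+ i * y ^+ b == 1) = (x ^+ i * y ^+ b == x ^+ 0 * y ^+ false)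
    by rewrite expg0 mulg1.
  have -> : (y^-1 * (x ^+ i * y ^+ b) == 1) = (x ^+ i * y ^+ b == x ^+ 0 * y ^+ true).
    by rewrite expg0 mul1g expg1 -eq_mulVg1 eq_sym.
  have NR : (N%:R != 0 :> R)%R by rewrite pnatr_eq0 -lt0n.
  rewrite !eqxy // /wA; case: i hi => [|i'] hi /=.
    by case: b => /=; field; rewrite ?NR.
  lra.
Qed.



Lemma phaseA m : 0 < m -> m <= n -> forall j, j < m ->
  exists g : 'I_j.+1 -> gT, exists p : 'I_j.+1 -> R, Inv g p (wA m (m - j) j.+1).
Proof.
move=> m0 mn; elim=> [_|j IH hj].
  by exists g1, p1; rewrite subn0; exact: Inv_base.
have [g [p Hgp]] := IH (ltnW hj).
have [b hb] : exists b, m - j = b.+1 /\ 0 < b by exists (m - j).-1; lia.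
case: hb => hb b0.
have bR : (0 < b%:R :> R)%R by rewrite ltr0n.
have mR : (0 < m%:R :> R)%R by rewrite ltr0n.
exists (consf (x ^+ j.+1 * y) g), (consf (b.+1%:R^-1)%R p).
apply: Inv_weq (Inv_step Hgp _ _) _.
- lia.
- rewrite invr_ge0 ler0n /= invf_le1 ?ler1n ?ltr0n //.
- move=> i hi; rewrite /wA hb.
  have -> : (m - j.+1 = b)%N by lia.
  rewrite -addn1 natrD.
  case: (leqP i j.+1) => hij; do ![case: ifP => ?]; try (exfalso; lia).
  all: have b1 : (b%:R + 1 != 0 :> R)%R by rewrite lt0r_neq0 // ltr_wpDl // ltW.
  all: have m1 : (m%:R != 0 :> R)%R by rewrite lt0r_neq0.
  all: by field; rewrite ?b1 ?m1.
Qed.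
Lemma phaseB L : 0 < L -> forall s, L * 2 ^ s <= n ->
  forall k (g : 'I_k -> gT) p, Inv g p (wB L) ->
  exists k', k' = (k + s)%N /\
    exists g' : 'I_k' -> gT, exists p' : 'I_k' -> R, Inv g' p' (wB (L * 2 ^ s)).
Proof.
move=> L0; elim=> [|s IH] hs k g p Hgp.
  by exists k; split; [rewrite addn0 | exists g, p; rewrite expn0 muln1].
have hs' : (L * 2 ^ s <= n)%N by apply: leq_trans hs; rewrite leq_mul2l expnS leq_pmull ?expn_gt0 ?orbT.
have [k' [hk' [g' [p' Hgp']]]] := IH hs' k g p Hgp.
have e2 : (L * 2 ^ s.+1 = L * 2 ^ s * 2)%N by rewrite expnS mulnCA mulnC.
rewrite e2 in hs *.
have L'0 : (0 < L * 2 ^ s)%N by rewrite muln_gt0 L0 expn_gt0.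
move: (L * 2 ^ s)%N L'0 hs Hgp' => L' L'0 hs Hgp'.
exists k'.+1; split; first by rewrite hk' addnS.
exists (consf (x ^+ (L' * 2 - 1)%N * y) g'), (consf (1 / 2)%R p').
apply: Inv_weq (Inv_step Hgp' _ _) _.
- lia.
- apply/andP; split; lra.
- move=> i hi; rewrite /wB.
  have LR : (L'%:R != 0 :> R)%R by rewrite pnatr_eq0 -lt0n.
  rewrite natrM.
  case: (leqP i (L' * 2 - 1)%N) => hij; do ![case: ifP => ?]; try (exfalso; lia).
  all: by field; rewrite ?LR.
Qed.
Lemma mix_final m t : odd m -> n = (2 ^ t * m)%N -> #|G| = n.*2 ->
  (forall z, z \in G -> exists i (b : bool), (i < n)%N /\ z = x ^+ i * y ^+ b) ->
  mixes_in R G (t + m).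
Proof.
move=> om hn cG Hs.
have m0 : (0 < m)%N by case: (m) om.
have mn : (m <= n)%N by rewrite hn leq_pmull ?expn_gt0.
have [g [p HA]] := @phaseA m m0 mn m.-1 (ltac:(by rewrite ltn_predL)).
have HB0 : Inv g p (wB m).
  apply: Inv_weq HA _ => i hi; rewrite /wA /wB prednK //.
  rewrite (_ : m - m.-1 = 1)%N; last by lia.
  by case: ifP => [/eqP->|_]; rewrite ?m0 // mulr1n.
have hs : (m * 2 ^ t <= n)%N by rewrite hn mulnC.
have [k' [hk' [g' [p' HBn]]]] := phaseB m0 hs HB0.
rewrite mulnC -hn in HBn.
have -> : (t + m = k')%N by rewrite hk' prednK // addnC.
exists g', p'; case: HBn => H1 H2 H3; split => // z /Hs [i [b [hi ->]]].
by rewrite H3 // /wB hi cG -mul2n natrM div1r.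
Qed.
End G.

Definition fxy (gT : finGroupType) (x y : gT) n (ib : 'I_n * bool) : gT :=
  (x ^+ ib.1 * y ^+ ib.2)%g.

Lemma card_le_of_surj (gT : finGroupType) (G : {group gT}) (x y : gT) n :
  (forall z, z \in G -> exists i (b : bool), (i < n)%N /\ z = (x ^+ i * y ^+ b)%g) ->
  (#|G| <= #|(@fxy _ x y n @: [set: 'I_n * bool])| <= n.*2)%N.
Proof.
move=> Hs; apply/andP; split.
  apply: subset_leq_card; apply/subsetP => z /Hs [i [b [hi ->]]].
  by apply/imsetP; exists (Ordinal hi, b).
by apply: leq_trans (leq_imset_card _ _) _; rewrite cardsT card_prod card_ord card_bool muln2.
Qed.

Lemma inj_of_card (gT : finGroupType) (G : {group gT}) (x y : gT) n :
  (forall z, z \in G -> exists i (b : bool), (i < n)%N /\ z = (x ^+ i * y ^+ b)%g) ->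
  #|G| = n.*2 ->
  forall i j (b c : bool), (i < n)%N -> (j < n)%N ->
  (x ^+ i * y ^+ b = x ^+ j * y ^+ c)%g -> i = j /\ b = c.
Proof.
move=> Hs cG; have /andP [h1 h2] := card_le_of_surj Hs.
have : #|(@fxy _ x y n @: [set: 'I_n * bool])| == #|[set: 'I_n * bool]|.
  by rewrite cardsT card_prod card_ord card_bool muln2 eqn_leq h2 -cG h1.
move/imset_injP => finj i j b c hi hj E.
by have [] := finj (Ordinal hi, b) (Ordinal hj, c) (in_setT _) (in_setT _) E => -> ->.
Qed.

Lemma mix_trivial (R : realType) (gT : finGroupType) (G : {group gT}) :
  G = 1%G :> {set gT} -> mixes_in R G 1.
Proof.
move=> G1.
exists (consf 1%g (fun _ : 'I_0 => 1%g)), (consf (1 / 2)%R (fun _ : 'I_0 => 0%R)); split.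
- by move=> i; rewrite /consf; case: unlift => [[] //|]; rewrite group1.
- by move=> i; rewrite /consf; case: unlift => [[] //|]; apply/andP; split; lra.
- move=> z; rewrite G1 inE => /eqP ->; rewrite subprod_cons !subprod0 invg1 mulg1 eqxx cards1.
  by rewrite invr1 /= mulr1n; lra.
Qed.

Theorem mainTheorem17 (R : realType) (gT : finGroupType) (G : {group gT})
    (t m : nat) :
  odd m -> is_dihedral G (2 ^ t * m) -> (mixlen R G <= t + m)%N.
Proof.
move=> om iso.
suff mx : mixes_in R G (t + m).
  rewrite /mixlen; case: pselect => [h|//].
  by case: ex_minnP => k _ /(_ (t + m)) -> //; apply: asboolT.
have m0 : (0 < m)%N by case: (m) om.
have := isoGrp_hom iso; case/existsP => -[x y] /=; rewrite !xpair_eqE /=.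
case/and4P => /eqP GE /eqP Hx /eqP Hy /eqP Hxy.
set n := (2 ^ t * m)%N in iso Hx.
have n0 : (0 < n)%N by rewrite muln_gt0 expn_gt0 m0.
have Gx : x \in G by rewrite -GE (subsetP (joing_subl _ _)) // cycle_id.
have Gy : y \in G by rewrite -GE (subsetP (joing_subr _ _)) // cycle_id.
have Hs : forall z, z \in G -> exists i (b : bool), (i < n)%N /\ z = (x ^+ i * y ^+ b)%g.
  move=> z; rewrite -GE norm_joinEr ?norms_cycle ?Hxy ?groupV ?cycle_id //.
  case/mulsgP => u v /cycleP [a ->] /cycleP [c ->] ->.
  exists (a %% n)%N, (odd c); split; first by rewrite ltn_pmod.
  by rewrite (expg_mod _ Hx) -modn2 (expg_mod _ Hy).
have [n1|] := ltnP 1 n.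
  have cG : #|G| = n.*2.
    have iD := Grp_dihedral n1.
    have isoGD : G \isog [set: 'D_n.*2]%G.
      by rewrite isogEhom; apply/andP; split; [rewrite (iD _ G) -(iso _ G) homg_refl
                                              | rewrite (iso _ _) -(iD _ _) homg_refl].
    by rewrite (card_isog isoGD) card_dihedral.
  exact: (mix_final Hx Hy Hxy R Gx Gy n0 (inj_of_card Hs cG) om erefl cG Hs).
rewrite leq_eqVlt ltnS leqn0 (gtn_eqF n0) orbF => /eqP n1.
have [t0 m1] : t = 0%N /\ m = 1%N.
  move: n1; rewrite /n; case: (t) => [|t']; first by rewrite mul1n.
  by rewrite expnS; lia.
rewrite t0 m1.
have [y1|yn1] := eqVneq y 1%g.
  apply: mix_trivial; apply/trivgP/subsetP => z /Hs [i [b [hi ->]]].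
  by move: hi; rewrite -/n n1 ltnS leqn0 => /eqP ->; rewrite y1 expg1n !mulg1 group1.
have cG : #|G| = n.*2.
  have /andP [h1 h2] := card_le_of_surj Hs.
  apply/eqP; rewrite eqn_leq (leq_trans h1 h2) n1 /=.
  apply: (@leq_trans #|[set 1%g; y]|); first by rewrite cards2 eq_sym yn1.
  apply: subset_leq_card; apply/subsetP => z; rewrite !inE => /orP [] /eqP ->; rewrite ?group1 //.
have := mix_final Hx Hy Hxy R Gx Gy n0 (inj_of_card Hs cG) om erefl cG Hs.
by rewrite t0 m1.
Qed.
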